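(* Let $X$ be a compact Hausdorff space and let $\rho\colon X\times X\to[0,\infty]$ be a function continuous with respect to the upper topology on $[0,\infty]$ such that for all $x,y\in X$, $$\rho(x,y)=\inf_{z\in X}\big(\rho(x,z)+\rho(z,y)\big).$$ Let $A=\{x\in X\mid\rho(x,x)=0\}$. Then for all $x,y\in X$, $$\rho(x,y)=\inf_{a\in A}\big(\rho(x,a)+\rho(a,y)\big).$$
   Context: The upper topology on $[0,\infty]$ is the topology whose nonempty proper open sets are the sets $]u,\infty]$ for $u\in[0,\infty]$; continuity into it means lower semicontinuity. The infimum of the empty set is $\infty$. *)

(* Defs.v *)
From HB Require Import structures.
From mathcomp Require Import all_boot all_order all_algebra.
From mathcomp Require Import all_classical all_reals all_analysis.
Set Implicit Arguments. Unset Strict Implicit. Unset Printing Implicit Defensive.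
Import Order.TTheory GRing.Theory Num.Theory.
Local Open Scope classical_set_scope.
Local Open Scope ereal_scope.

(* Continuity of f : T -> [0,+oo] (values in \bar R) w.r.t. the upper topology
   on [0,+oo], whose nonempty proper open sets are ]u,+oo], u in [0,+oo]:
   every preimage of such a set is open (i.e. lower semicontinuity). *)
Definition upper_continuous (R : realType) (T : topologicalType)
  (f : T -> \bar R) : Prop :=
  forall u : \bar R, 0 <= u -> open (f @^-1` [set v | u < v]).

(* Main.v *)
Require Import Defs.
From HB Require Import structures.
From mathcomp Require Import all_boot all_order all_algebra.
From mathcomp Require Import all_classical all_reals all_analysis.
From mathcomp Require Import ring lra.
Import Order.TTheory GRing.Theory Num.Theory.
Local Open Scope classical_set_scope.
Local Open Scope ereal_scope.

Lemma lscD (R : realType) (X : topologicalType) (f g : X -> \bar R) :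
  (forall x, 0 <= f x) -> (forall x, 0 <= g x) ->
  lower_semicontinuous f -> lower_semicontinuous g ->
  lower_semicontinuous (fun x => f x + g x).
Proof.
move=> f0 g0 lf lg x a.
have [fxoo _|fxn] := eqVneq (f x) +oo.
  have := lf x a; rewrite fxoo ltry => /(_ isT) [V nV HV].
  by exists V => // y Vy; apply: lt_le_trans (HV y Vy) _; rewrite leeDl.
have [gxoo _|gxn] := eqVneq (g x) +oo.
  have := lg x a; rewrite gxoo ltry => /(_ isT) [V nV HV].
  by exists V => // y Vy; apply: lt_le_trans (HV y Vy) _; rewrite leeDr.
have ff : f x \is a fin_num by rewrite ge0_fin_numE // ltey.
have gf : g x \is a fin_num by rewrite ge0_fin_numE // ltey.
rewrite -(fineK ff) -(fineK gf) -EFinD lte_fin => alt.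
set p := fine (f x) in alt *; set q := fine (g x) in alt *.
set e := ((p + q - a) / 2)%R.
have e0 : (0 < e)%R by rewrite divr_gt0 // subr_gt0.
have := lf x (p - e)%R; rewrite -(fineK ff) lte_fin gtrBl => /(_ e0) [V1 nV1 H1].
have := lg x (q - e)%R; rewrite -(fineK gf) lte_fin gtrBl => /(_ e0) [V2 nV2 H2].
exists (V1 `&` V2); first exact: filterI.
move=> y [/H1 h1 /H2 h2].
have -> : a = ((p - e) + (q - e))%R by rewrite /e; field.
by rewrite EFinD; apply: lteD.
Qed.

Lemma lsc_closed (R : realType) (X : topologicalType) (f : X -> \bar R) (r : R) :
  lower_semicontinuous f -> closed [set w | f w <= r%:E].
Proof.
move=> /lower_semicontinuousP /(_ r) /open_closedC.
by congr closed; apply/seteqP; split => w /=; rewrite leNgt =>  /negP.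
Qed.

Lemma lsc_rho (R : realType) (X : topologicalType) (rho : X * X -> \bar R) :
  (forall p, 0 <= rho p) -> upper_continuous rho ->
  forall s, lower_semicontinuous (fun w => rho (s, w)) /\
            lower_semicontinuous (fun w => rho (w, s)).
Proof.
move=> r0 uc s; split; apply/lower_semicontinuousP => a.
- have [a0|a0] := leP 0%R a.
    apply: (@open_comp _ _ (fun w => (s, w)) [set v | a%:E < rho v]); last first.
      by apply: uc; rewrite lee_fin.
    move=> w _; apply: cvg_pair; [exact: cvg_cst | exact: cvg_id].
  rewrite (_ : [set x | _] = setT); first exact: openT.
  by apply/seteqP; split => // w _ /=; apply: lt_le_trans (r0 _); rewrite lte_fin.
- have [a0|a0] := leP 0%R a.
    apply: (@open_comp _ _ (fun w => (w, s)) [set v | a%:E < rho v]); last first.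
      by apply: uc; rewrite lee_fin.
    move=> w _; apply: cvg_pair; [exact: cvg_id | exact: cvg_cst].
  rewrite (_ : [set x | _] = setT); first exact: openT.
  by apply/seteqP; split => // w _ /=; apply: lt_le_trans (r0 _); rewrite lte_fin.
Qed.
Lemma chain_inter (X : topologicalType) (F : set (set X)) :
  compact [set: X] -> (exists B, F B) ->
  (forall B, F B -> closed B /\ B !=set0) ->
  (forall A B, F A -> F B -> A `<=` B \/ B `<=` A) ->
  exists p, forall B, F B -> B p.
Proof.
move=> Xco [B0 FB0] Fcl Ftot.
have FF : Filter (filter_from F id).
  apply: filter_from_filter; first by exists B0.
  move=> i j Fi Fj; have [ij|ji] := Ftot _ _ Fi Fj.
    by exists i => // z zi; split => //; exact: ij.
  by exists j => // z zj; split => //; exact: ji.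
have PF : ProperFilter (filter_from F id).
  by apply: filter_from_proper => i /Fcl[].
have [p [_ clp]] := Xco _ PF (filterT).
exists p => B FB; have [clB _] := Fcl _ FB; apply: clB.
by move: clp; rewrite clusterE => /(_ B); apply; exists B.
Qed.

Arguments lsc_rho {R X rho}.

Lemma attain (R : realType) (X : topologicalType) (rho : X * X -> \bar R) :
  compact [set: X] -> (forall p, 0 <= rho p) -> upper_continuous rho ->
  (forall x y : X,
     rho (x, y) = ereal_inf [set rho (x, z) + rho (z, y) | z in [set: X]]) ->
  forall u v, exists w, rho (u, w) + rho (w, v) <= rho (u, v).
Proof.
move=> Xco r0 uc tri u v.
have [uvoo|uvn] := eqVneq (rho (u, v)) +oo.
  by exists u; rewrite uvoo leey.
have uvf : rho (u, v) \is a fin_num by rewrite ge0_fin_numE // ltey.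
set d := fine (rho (u, v)).
have lf : lower_semicontinuous (fun w => rho (u, w) + rho (w, v)).
  apply: lscD => [w|w||]; [exact: r0|exact: r0|exact: (lsc_rho r0 uc u).1|exact: (lsc_rho r0 uc v).2].
pose F := [set B | exists2 e : R, (0 < e)%R & B = [set w | rho (u, w) + rho (w, v) <= (d + e)%:E]].
have [p Hp] : exists p, forall B, F B -> B p.
  apply: chain_inter => //.
- by exists [set w | rho (u, w) + rho (w, v) <= (d + 1)%:E]; exists 1%R.
- move=> B [e e0 ->]; split; first exact: lsc_closed.
  have : ereal_inf [set rho (u, z) + rho (z, v) | z in [set: X]] < (d + e)%:E.
    by rewrite -tri -[X in X < _](fineK uvf) lte_fin ltrDl.
  by move=> /ereal_inf_lt [_ [z _ <-] lt]; exists z; exact: ltW.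
- move=> _ _ [e1 e10 ->] [e2 e20 ->].
  have [le12|le21] := leP e1 e2.
    by left => w /= h; apply: (le_trans h); rewrite lee_fin lerD2l.
  by right => w /= h; apply: (le_trans h); rewrite lee_fin lerD2l ltW.
- exists p; rewrite -(fineK uvf); apply/lee_addgt0Pr => e e0; rewrite -EFinD.
by apply: (Hp [set w | rho (u, w) + rho (w, v) <= (d + e)%:E]); exists e.
Qed.

Arguments attain {R X rho}.

Lemma fin_le (R : realType) (a : \bar R) (c : R) : 0 <= a -> a <= c%:E -> a \is a fin_num.
Proof. by move=> a0 ac; rewrite ge0_fin_numE // (le_lt_trans ac) ?ltry. Qed.

Theorem lemma5p13 (R : realType) (X : topologicalType)
  (rho : X * X -> \bar R) :
  compact [set: X] -> hausdorff_space X ->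
  (forall p, 0 <= rho p) ->
  upper_continuous rho ->
  (forall x y : X,
     rho (x, y) = ereal_inf [set rho (x, z) + rho (z, y) | z in [set: X]]) ->
  forall x y : X,
    rho (x, y) = ereal_inf [set rho (x, a) + rho (a, y)
                           | a in [set a : X | rho (a, a) = 0]].
Proof.
move=> Xco _ r0 uc tri x y.
have LB : forall u v z, rho (u, v) <= rho (u, z) + rho (z, v).
  by move=> u v z; rewrite tri; apply: ereal_inf_lbound; exists z.
apply/le_anti/andP; split.
  by apply: le_ereal_inf_tmp => _ [a _ <-]; exact: LB.
have [xyoo|xyn] := eqVneq (rho (x, y)) +oo; first by rewrite xyoo leey.
have xyf : rho (x, y) \is a fin_num by rewrite ge0_fin_numE // ltey.
set c := fine (rho (x, y)).
have cE : rho (x, y) = c%:E by rewrite /c fineK.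
suff [t [tt0 tP]] : exists t, rho (t, t) = 0 /\ rho (x, t) + rho (t, y) <= c%:E.
  rewrite cE; apply: le_trans tP; apply: ereal_inf_lbound; by exists t.
pose P z := rho (x, z) + rho (z, y) <= c%:E.
pose Q z := [set w | rho (x, z) + rho (z, w) + rho (w, y) <= c%:E].
have K1 : forall z, P z -> exists w, Q z w.
  move=> z Pz; have [w Hw] := attain Xco r0 uc tri z y.
  exists w; rewrite /Q /= -addeA; apply: le_trans Pz; exact: leeD2l.
have K2 : forall z w, Q z w -> P w.
  move=> z w Hw; apply: le_trans Hw; apply: leeD2r; exact: LB.
have K3 : forall z w, Q z w -> Q w `<=` Q z.
  move=> z w Hw u Hu.
  have Pw := K2 _ _ Hw.
  have wyf : rho (w, y) \is a fin_num.
    apply: (@fin_le _ _ c) => //; apply: le_trans Pw; exact: leeDr.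
  have h1 : rho (x, z) + rho (z, w) <= rho (x, w).
    rewrite -(leeD2rE _ _ wyf); apply: (le_trans Hw); rewrite -cE; exact: LB.
  rewrite /Q /=; apply: le_trans Hu; apply: leeD2r.
  apply: (le_trans (leeD2l _ (LB z u w))); rewrite addeA; exact: leeD2r.
have K4 : forall t, Q t t -> rho (t, t) = 0 /\ P t.
  move=> t Qt; split; last exact: K2 Qt.
  have Pt := K2 _ _ Qt.
  have sf : rho (x, t) + rho (t, y) \is a fin_num.
    exact: (@fin_le _ _ c) (adde_ge0 (r0 _) (r0 _)) Pt.
  apply/le_anti; rewrite r0 andbT.
  rewrite -(leeD2lE _ _ sf) adde0; apply: le_trans (LB x y t).
  rewrite cE; apply: le_trans Qt; rewrite -addeA (addeC (rho (t, y))) addeA.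
  by rewrite -addeA (addeC (rho (t, t))) !addeA.
pose T := {z : X | P z}.
pose Rl := fun s t : T => `[< sval s = sval t \/ Q (sval s) (sval t) >].
have [w0 Hw0] := attain Xco r0 uc tri x y.
have Pw0 : P w0 by rewrite /P -cE.
have [t tmax] : exists t, premaximal Rl t.
{ apply: (@ZL_preorder T (exist _ w0 Pw0) Rl).
- by move=> s; apply/asboolP; left.
- move=> r s u /asboolP[rs|rs] /asboolP[su|su]; apply/asboolP.
  + by left; rewrite rs.
  + by right; rewrite rs.
  + by right; rewrite -su.
  + by right; exact: (K3 _ _ rs).
- move=> A Atot.
  have [[s0 As0]|A0] := pselect (exists s, A s); last first.
    by exists (exist _ w0 Pw0) => s As; exfalso; apply: A0; exists s.
  have [p Hp] : exists p, forall B, [set B | exists2 s, A s & B = Q (sval s)] B -> B p.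
    { apply: chain_inter => //.
    - by exists (Q (sval s0)); exists s0.
    - move=> _ [s As ->]; split; last exact: K1 (svalP s).
      apply: lsc_closed; apply: lscD => [w|w||].
      + exact: adde_ge0 (r0 _) (r0 _).
      + exact: r0.
      + apply: lscD => [w|w||]; [exact: r0|exact: r0| |exact: (lsc_rho r0 uc _).1].
        by move=> w' a lt; exists setT => //; exact: filterT.
      + exact: (lsc_rho r0 uc _).2.
    - move=> _ _ [s As ->] [s' As' ->].
      have [/asboolP[e|e]|/asboolP[e|e]] := Atot _ _ As As'.
      + by left; rewrite e.
      + by right; exact: K3.
      + by left; rewrite e.
      + by left; exact: K3. }
  have Pp : P p by apply: (K2 (sval s0)); apply: Hp; exists s0.
  exists (exist _ p Pp) => s As; apply/asboolP; right.
  by apply: Hp; exists s. }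
have [w Qw] := K1 _ (svalP t).
have Pw := K2 _ _ Qw.
have := tmax (exist _ w Pw); rewrite /Rl.
move=> /(_ (asboolT (or_intror Qw))) /asboolP /= H.
have Qtt : Q (sval t) (sval t).
  case: H => [E|H]; first by rewrite -[X in Q _ X]E.

  exact: (K3 _ _ Qw).
have [tt0 Pt] := K4 _ Qtt.
by exists (sval t).
Qed.
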